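(* Let $k\ge 2$ be an integer. For every positive integer $n$, deterministically (for every realization), the random $k$-tree $G(n)$ has clustering coefficient at least $1/2$.
   Context: Random $k$-tree process: $G(0)$ is a clique on $k$ vertices; for $t\ge1$, $G(t)$ is obtained from $G(t-1)$ by choosing a $k$-clique of $G(t-1)$ uniformly at random, creating a new vertex, and joining it to all vertices of the chosen clique. The clustering coefficient of a graph $G$ is $cc(G)=\frac{1}{|V(G)|}\sum_{u\in V(G)}\frac{|\langle N(u)\rangle|}{\binom{\deg(u)}{2}}$, where $|\langle N(u)\rangle|$ is the number of edges $xy$ with both $x,y$ neighbors of $u$. *)

(* Defs.v *)
From mathcomp Require Import all_boot all_order all_algebra.
Set Implicit Arguments. Unset Strict Implicit. Unset Printing Implicit Defensive.
Import Order.TTheory GRing.Theory Num.Theory.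

(* A realization of the random k-tree process is encoded by the sequence of
   chosen cliques C : nat -> seq nat, where C t (t >= 1) is the k-clique of
   G(t-1) chosen at step t.  Vertices of G(t) are 0, ..., k+t-1; the vertices
   0..k-1 form the initial clique G(0), and vertex k+t-1 is the vertex created
   at step t, joined to every vertex of C t. *)

Definition ktree_adj (k : nat) (C : nat -> seq nat) (t : nat) : rel nat :=
  fun x y =>
    [&& x < k + t, y < k + t, x != y &
     [|| (x < k) && (y < k),
         [&& k <= x, y < x & y \in C (x - k).+1] |
         [&& k <= y, x < y & x \in C (y - k).+1] ]].

Definition is_kclique (k : nat) (C : nat -> seq nat) (t : nat) (S : seq nat) : Prop :=
  [/\ uniq S, size S = k, all (fun x => x < k + t) S &
      forall x y, x \in S -> y \in S -> x != y -> ktree_adj k C t x y].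

Definition valid_realization (k : nat) (C : nat -> seq nat) (n : nat) : Prop :=
  forall t, 1 <= t <= n -> is_kclique k C t.-1 (C t).

(* Clustering coefficient of a graph on vertex set {0,...,N-1} with
   (symmetric) adjacency relation e:
   cc = 1/N * sum_u |<N(u)>| / binom(deg u, 2).
   (Division by 0 yields 0 in MathComp; it never occurs in k-trees, k>=2.) *)
Definition nbr_edges (N : nat) (e : rel nat) (u : 'I_N) : nat :=
  #|[set p : 'I_N * 'I_N |
       [&& (p.1 < p.2)%N, e u p.1, e u p.2 & e p.1 p.2]]|.

Definition degree (N : nat) (e : rel nat) (u : 'I_N) : nat :=
  #|[set v : 'I_N | e u v]|.

Definition clustering_coeff (N : nat) (e : rel nat) : rat :=
  (N%:R)^-1 * \sum_(u < N) ((nbr_edges e u)%:R / ('C(degree e u, 2))%:R).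

(* Main.v *)
Require Import Defs.
From mathcomp Require Import all_boot all_order all_algebra zify ring lra.
Set Implicit Arguments. Unset Strict Implicit. Unset Printing Implicit Defensive.

Lemma sum_mem (M : nat) (S : seq nat) : uniq S -> all (fun x => x < M) S ->
  \sum_(0 <= x < M) (x \in S : nat) = size S.
Proof.
move=> uS aS.
rewrite -big_mkcond /= -big_filter sum1_size.
apply/perm_size/uniq_perm; first by rewrite filter_uniq // iota_uniq.
  by [].
move=> x; rewrite mem_filter mem_iota /=; case xS: (x \in S) => //=.
have := allP aS x xS; simpl; lia.
Qed.

Lemma bin2_dbl n : 'C(n, 2) * 2 = n * n.-1.
Proof.
elim: n => [|n IH] //; rewrite binS bin1 mulnDl IH /=; case: n {IH} => //= n; lia.
Qed.

Lemma sum_pairs (M : nat) (P : pred nat) :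
  \sum_(0 <= x < M) \sum_(0 <= y < M) ([&& x < y, P x & P y] : nat)
  = 'C(\sum_(0 <= x < M) (P x : nat), 2).
Proof.
elim: M => [|M IH]; first by rewrite !big_geq.
rewrite !big_nat_recr //=.
have -> : \sum_(0 <= y < M) ([&& M < y, P M & P y] : nat) = 0.
  by rewrite big_nat big1 // => y /andP [_ hy]; rewrite ltnNge (ltnW hy).
rewrite ltnn /= !addn0.
under eq_bigr => i _ do rewrite big_nat_recr //=.
rewrite big_split /= IH.
have -> : \sum_(0 <= i < M) ([&& i < M, P i & P M] : nat)
        = P M * \sum_(0 <= i < M) (P i : nat).
  rewrite big_distrr /= big_nat [RHS]big_nat; apply: eq_bigr => i /andP [_ hi].
  by rewrite hi /=; case: (P i); case: (P M).
case: (P M); rewrite ?mul1n ?mul0n ?addn0 //.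
by rewrite addn1 binS bin1.
Qed.

Lemma sum_eq1 (M w : nat) : w < M -> \sum_(0 <= x < M) (x == w : nat) = 1.
Proof.
move=> hw; have := (@sum_mem M [:: w]); rewrite /= hw => <- //.
by apply: eq_bigr => x _; rewrite mem_seq1.
Qed.
Lemma adj_lt k C t x y : ktree_adj k C t x y -> (x < k+t) && (y < k+t).
Proof. by case/and4P => -> ->. Qed.

Lemma adj_sym k C t x y : ktree_adj k C t x y = ktree_adj k C t y x.
Proof.
rewrite /ktree_adj; case: (x < k + t); case: (y < k + t) => //=.
rewrite eq_sym; case: (y != x) => //=.
by rewrite andbC; case: (_ && _) => //=; rewrite orbC.
Qed.

Lemma adj_step k C t x y : (forall z, z \in C t.+1 -> z < k+t) ->
  ktree_adj k C t.+1 x y =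
  [|| ktree_adj k C t x y, (x == k+t) && (y \in C t.+1) | (y == k+t) && (x \in C t.+1)].
Proof.
move=> hS; rewrite /ktree_adj addnS.
have hk : (k + t < k) = false by rewrite ltnNge leq_addr.
have hwS : (k+t \in C t.+1) = false by apply/negbTE/negP => /hS; rewrite ltnn.
have hxS : x \in C t.+1 -> x < k + t by apply: hS.
have hyS : y \in C t.+1 -> y < k + t by apply: hS.
have [hx|hx|->] := ltngtP x (k+t); have [hy|hy|->] := ltngtP y (k+t).
- by rewrite !ltnS (ltnW hx) (ltnW hy) /= !orbF.
- by rewrite (ltnS y) (leqNgt y) hy /= !andbF.
- by rewrite ltnS (ltnW hx) (ltn_eqF hx) hx addKn leq_addr hk (ltnNge (k+t) x) (ltnW hx) /= !andbF /= ltnSn.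
- by rewrite (ltnS x) (leqNgt x) hx.
- by rewrite (ltnS x) (leqNgt x) hx.
- rewrite (ltnS x) (leqNgt x) hx.
  by case: (x \in _) hxS => // /(_ isT); rewrite ltnNge (ltnW hx).
- by rewrite ltnSn (ltnS y) (ltnW hy) hk addKn leq_addr /= !andbF /= orbF.
- rewrite (ltnS y) (leqNgt y) hy /= !andbF /= orbF.
  by case: (y \in _) hyS => // /(_ isT); rewrite ltnNge (ltnW hy).
- by rewrite hwS /= !andbF.
Qed.

Definition deg k C M t u := \sum_(0 <= v < M) (ktree_adj k C t u v : nat).
Definition edg k C M t u := \sum_(0 <= x < M) \sum_(0 <= y < M)
  ([&& x < y, ktree_adj k C t u x, ktree_adj k C t u y & ktree_adj k C t x y] : nat).

Lemma adj_mono k C t x y : (forall z, z \in C t.+1 -> z < k+t) ->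
  ktree_adj k C t x y -> ktree_adj k C t.+1 x y.
Proof. by move=> hS h; rewrite adj_step // h. Qed.

Lemma deg_step k C M t u : (forall z, z \in C t.+1 -> z < k+t) -> uniq (C t.+1) ->
  k + t < M ->
  deg k C M t.+1 u = deg k C M t u + (u == k+t) * size (C t.+1) + (u \in C t.+1).
Proof.
move=> hS uS hM; rewrite /deg.
have aS : all (fun x => x < M) (C t.+1).
  apply/allP => z /hS; lia.
transitivity (\sum_(0 <= v < M) ((ktree_adj k C t u v : nat)
   + (u == k+t) * (v \in C t.+1) + (v == k + t) * (u \in C t.+1))).
  apply: eq_bigr => v _; rewrite adj_step //.
  case h: (ktree_adj k C t u v).
    have /andP [hu hv] := adj_lt h.
    by rewrite (ltn_eqF hu) (ltn_eqF hv).
  have wS : (k+t \in C t.+1) = false by apply/negbTE/negP => /hS; rewrite ltnn.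
  case: (eqVneq u (k+t)) => [->|hu]; case: (eqVneq v (k+t)) => [->|hv];
    rewrite ?wS ?eqxx ?(negbTE hu) ?(negbTE hv) /= ?andbF ?orbF;
    by case: (_ \in C t.+1).
rewrite big_split big_split /= -big_distrr -big_distrl /=.
by rewrite (sum_mem uS aS) sum_eq1 // mul1n.
Qed.

Lemma nb_le (a b : bool) : (a -> b) -> (a : nat) <= b.
Proof. by case: a; case: b => // /(_ isT). Qed.

Lemma nb_le2 (a b c : bool) : (a -> c) -> (b -> c) -> ~~ (a && b) -> (a : nat) + b <= c.
Proof. by case: a; case: b; case: c => // /(_ isT). Qed.

Lemma edg_mono k C M t u : (forall z, z \in C t.+1 -> z < k+t) ->
  edg k C M t u <= edg k C M t.+1 u.
Proof.
move=> hS; apply: leq_sum => x _; apply: leq_sum => y _; apply: nb_le.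
by case/and4P => -> /(adj_mono hS) -> /(adj_mono hS) -> /(adj_mono hS) ->.
Qed.

Lemma edg_step k C M t u : (forall z, z \in C t.+1 -> z < k+t) -> uniq (C t.+1) ->
  k + t < M ->
  (forall x y, x \in C t.+1 -> y \in C t.+1 -> x != y -> ktree_adj k C t x y) ->
  u \in C t.+1 ->
  edg k C M t u + (size (C t.+1)).-1 <= edg k C M t.+1 u.
Proof.
move=> hS uS hM hcl huS.
set S := C t.+1.
have aR : all (fun x => x < M) (rem u S).
  apply/allP => z /mem_rem /hS; lia.
rewrite -(size_rem huS) -(sum_mem (rem_uniq u uS) aR).
have -> : \sum_(0 <= x < M) (x \in rem u S : nat)
   = \sum_(0 <= x < M) \sum_(0 <= y < M) (((y == k + t) && (x \in rem u S)) : nat).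
  apply: eq_bigr => x _.
  under eq_bigr => y _ do rewrite -mulnb.
  by rewrite -big_distrl /= sum_eq1 // mul1n.
rewrite /edg -big_split /=; apply: leq_sum => x _.
rewrite -big_split /=; apply: leq_sum => y _.
apply: nb_le2.
- by case/and4P => -> /(adj_mono hS) -> /(adj_mono hS) -> /(adj_mono hS) ->.
- case/andP => /eqP -> hx.
  rewrite (mem_rem_uniq _ uS) /= in hx; case/andP: hx => hxu hxS.
  rewrite (hS _ hxS) /= !adj_step // eqxx huS hxS /= !orbT andbT.
  by rewrite hcl // eq_sym.
- apply/negP => /andP [/and4P [_ _ h _] /andP [/eqP hy _]].
  by move: (adj_lt h); rewrite hy ltnn andbF.
Qed.

Lemma edg_new k C M t : (forall z, z \in C t.+1 -> z < k+t) -> uniq (C t.+1) ->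
  k + t < M ->
  (forall x y, x \in C t.+1 -> y \in C t.+1 -> x != y -> ktree_adj k C t x y) ->
  'C(size (C t.+1), 2) <= edg k C M t.+1 (k + t).
Proof.
move=> hS uS hM hcl.
have aS : all (fun x => x < M) (C t.+1) by apply/allP => z /hS; lia.
rewrite -(sum_mem uS aS) -sum_pairs.
apply: leq_sum => x _; apply: leq_sum => y _; apply: nb_le.
case/and3P => hxy hx hy.
rewrite hxy !adj_step // eqxx hx hy /= !orbT /=.
by rewrite hcl // (ltn_eqF hxy).
Qed.

Lemma deg_out k C M t u : k + t <= u -> deg k C M t u = 0.
Proof.
move=> hu; rewrite /deg big1 // => v _.
case h: (ktree_adj k C t u v) => //.
by move: (adj_lt h) => /andP [hu' _]; move: hu'; rewrite ltnNge hu.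
Qed.

Lemma adj0 k C u v : ktree_adj k C 0 u v = [&& u < k, v < k & u != v].
Proof.
rewrite /ktree_adj addn0; case hu: (u < k); case hv: (v < k) => //=.
by rewrite andbT.
Qed.

Lemma inv_all k C n (hk : 2 <= k) (hC : valid_realization k C n) : forall t, t <= n ->
  (forall u, u < k + t -> k.-1 + (0 < t) <= deg k C (k+n) t u /\
      k.-1 * (2 * deg k C (k+n) t u - k) <= 2 * edg k C (k+n) t u)
  /\ \sum_(0 <= u < k+n) deg k C (k+n) t u = k * k.-1 + 2 * k * t.
Proof.
elim => [_|t IH htn].
  have hR u : u < k -> uniq (rem u (iota 0 k)) /\ all (fun x => x < k + n) (rem u (iota 0 k)).
    move=> hu; split; first by rewrite rem_uniq // iota_uniq.
    apply/allP => z /mem_rem; rewrite mem_iota; lia.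
  have hdeg u : u < k -> deg k C (k+n) 0 u = k.-1.
    move=> hu; have [u1 a1] := hR u hu.
    have -> : k.-1 = size (rem u (iota 0 k)) by rewrite size_rem ?mem_iota ?hu // size_iota.
    rewrite -(sum_mem u1 a1); apply: eq_bigr => v _.
    by rewrite adj0 (mem_rem_uniq _ (iota_uniq 0 k)) !inE mem_iota /= hu eq_sym; case: (v < k); case: (v != u).
  split.
    move=> u; rewrite addn0 => hu; rewrite hdeg // addn0; split => //.
    have [u1 a1] := hR u hu.
    have : 'C(k.-1, 2) <= edg k C (k+n) 0 u.
      have -> : k.-1 = size (rem u (iota 0 k)) by rewrite size_rem ?mem_iota ?hu // size_iota.
      rewrite -(sum_mem u1 a1) -sum_pairs.
      apply: leq_sum => x _; apply: leq_sum => y _; apply: nb_le.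
      case/and3P => hxy hx hy.
      rewrite (mem_rem_uniq _ (iota_uniq 0 k)) !inE mem_iota /= in hx.
      rewrite (mem_rem_uniq _ (iota_uniq 0 k)) !inE mem_iota /= in hy.
      rewrite hxy !adj0 hu; case/andP: hx => ? ?; case/andP: hy => ? ?.
      by rewrite (ltn_eqF hxy) /=; lia.
    have := bin2_dbl k.-1; nia.
  transitivity (\sum_(0 <= u < k + n) (u \in iota 0 k) * k.-1).
    apply: eq_bigr => u _; rewrite mem_iota /=.
    case hu: (u < k); first by rewrite hdeg // mul1n.
    by rewrite deg_out // addn0 leqNgt hu.
  rewrite -big_distrl /= sum_mem ?iota_uniq ?size_iota //; first by lia.
  apply/allP => z; rewrite mem_iota; lia.
move: IH => /(_ (ltnW htn)) [IHu IHs].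
have [uS szS aS hcl] := hC t.+1 (htn : 0 < t.+1 <= n).
rewrite /= in aS hcl.
have hS : forall z, z \in C t.+1 -> z < k+t by move=> z hz; have := allP aS z hz.
have hM : k + t < k + n by lia.
split.
- move=> u hu.
  have hd := deg_step u hS uS hM.
  case: (ltngtP u (k+t)) => [hlt|hgt|->]; last first.
  + rewrite (deg_step _ hS uS hM) eqxx deg_out // szS.
    have wS : (k+t \in C t.+1) = false by apply/negbTE/negP => /hS; rewrite ltnn.
    rewrite wS /= add0n mul1n addn0.
    have he := edg_new hS uS hM hcl; rewrite szS in he.
    have := bin2_dbl k; split; first by lia.
    have -> : 2 * k - k = k by lia.
    nia.
  + lia.
  + rewrite hd (ltn_eqF hlt) mul0n addn0.
    have [h1 h2] := IHu u hlt.
    have hb : (0 < t) || (u \in C t.+1).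
      case: t {IHu IHs hd htn hM} hS uS szS aS hcl hu hlt h1 h2 => //= hS uS szS aS hcl hu hlt h1 h2.
      have [] := uniq_min_size uS (s2 := iota 0 k) _ _.
      * by move=> z /hS; rewrite mem_iota addn0.
      * by rewrite size_iota szS.
      by move=> _ ->; rewrite mem_iota; lia.
    set d := deg k C (k + n) t u in h1 h2 *.
    have h1' : k.-1 <= d by move: h1; case: (0 < t); lia.
    case hus: (u \in C t.+1) hb => /= hb.
    * have he := edg_step hS uS hM hcl hus; rewrite szS in he.
      split; first by lia.
      have -> : 2 * (d + 1) - k = (2 * d - k) + 2 by lia.
      rewrite mulnDr; lia.
    * have he := @edg_mono k C (k+n) t u hS.
      rewrite orbF in hb; rewrite addn0; split; first by move: h1; rewrite hb; lia.
      lia.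
- under eq_bigr => u _ do rewrite (deg_step u hS uS hM).
  rewrite !big_split /= IHs -big_distrl /= sum_eq1 // (@sum_mem (k+n) _ uS) ?szS.
    lia.
  by apply/allP => z /hS; lia.
Qed.

Lemma sq2 (x k : nat) : 2 * x * k <= x * x + k * k.
Proof.
wlog h : x k / x <= k.
  move=> W; case: (leqP x k) => h; first exact: W.
  by rewrite mulnAC addnC; apply: W; apply: ltnW.
have [y ->] : exists y, k = x + y by exists (k - x); lia.
have e : 2 * x * (x + y) + y * y = x * x + (x + y) * (x + y) by ring.
rewrite -e; exact: leq_addr.
Qed.
Lemma id1 (k x K1 D1 D j: nat) : k = j + 2 -> D = k + x -> D1 = j+1+x -> K1 = j + 1 ->
  4*k*K1*(k+2*x) + D*D*D1 + D1*(2*x*k) = 4*k*D*D1 + D1*(x*x+k*k) + 4*k*x*j.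
Proof. move=> -> -> -> ->. ring. Qed.
Lemma key k D E B : 2 <= k -> k <= D -> B * 2 = D * D.-1 -> k.-1 * (2*D - k) <= 2*E -> 4*k*B <= 4*k*E + D*B.
Proof.
case: k => [|[|j]] // _ hD hB hE.
have [x hx] : exists x, D = j.+2 + x by exists (D - j.+2); lia.
set k := j.+2 in hx hE *.
have e1 : 2 * D - k = k + 2 * x by lia.
rewrite e1 /= in hE.
set D1 := D.-1 in hB.
have eD1 : D1 = j + 1 + x by rewrite /D1 hx /k; lia.
have id := @id1 k x j.+1 D1 D j (esym (addn2 j)) hx eD1 (esym (addn1 j)).
have h1 : 4 * k * (j.+1 * (k + 2 * x)) <= 4 * k * (2 * E) by rewrite leq_mul2l hE orbT.
have h2 : D1 * (2 * x * k) <= D1 * (x * x + k * k) by rewrite leq_mul2l sq2 orbT.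
rewrite -(leq_pmul2r (isT : 0 < 2)).
have -> : 4 * k * B * 2 = 4 * k * (D * D1) by rewrite -hB; ring.
have -> : (4 * k * E + D * B) * 2 = 4 * k * (2 * E) + D * D * D1 by rewrite mulnDl -(mulnA D) hB; ring.
move: h1 h2 id; rewrite !mulnA.
set a := 4 * k * j.+1 * (k + 2 * x); set b := D1 * 2 * x * k; set c := D1 * (x * x + k * k).
set d := 4 * k * 2 * E; set e := D * D * D1; set f := 4 * k * D * D1.
move=> h1 h2 id. lia.
Qed.

Import Order.TTheory GRing.Theory Num.Theory.

Theorem proposition4 (k : nat) (hk : 2 <= k) (C : nat -> seq nat) (n : nat)
  (hn : 0 < n) (hC : valid_realization k C n) :
  (1 / 2 <= clustering_coeff (k + n) (ktree_adj k C n))%R.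
Proof.
have [Hu Hs] := inv_all hk hC (leqnn n).
have HD (u : 'I_(k+n)) : degree (ktree_adj k C n) u = deg k C (k+n) n u.
  rewrite /degree /deg big_mkord -sum1dep_card big_mkcond /=.
  by apply: eq_bigr => v _; case: ktree_adj.
have HE (u : 'I_(k+n)) : nbr_edges (ktree_adj k C n) u = edg k C (k+n) n u.
  rewrite /nbr_edges /edg -sum1dep_card big_mkcond /= big_mkord.
  under [RHS]eq_bigr => x _ do rewrite big_mkord.
  rewrite pair_bigA /=; apply: eq_bigr => p _.
  by case: (_ && _).
rewrite /clustering_coeff.
under eq_bigr => u _ do rewrite HD HE.
set N := k + n.
have hN : (0 < N%:R :> rat)%R by rewrite ltr0n; lia.
set K := 4 * k.
have hK : (0 < K%:R :> rat)%R by rewrite ltr0n; lia.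
have term (u : 'I_N) : (1 - (deg k C N n u)%:R / K%:R <=
    (edg k C N n u)%:R / ('C(deg k C N n u, 2))%:R :> rat)%R.
  have [hd he] := Hu u (ltn_ord u).
  set D := deg k C N n u in hd he *; set E := edg k C N n u in he *.
  have hD : k <= D by move: hd; rewrite hn; lia.
  have hkey := key hk hD (bin2_dbl D) he.
  have hB : (0 < 'C(D, 2)) by rewrite bin_gt0; lia.
  set B := 'C(D, 2) in hkey hB *.
  rewrite -/K -(ler_nat rat) natrD !natrM in hkey.
  rewrite ler_pdivlMr ?ltr0n // -(ler_pM2l hK).
  have -> : (K%:R * ((1 - D%:R / K%:R) * B%:R) = K%:R * B%:R - D%:R * B%:R :> rat)%R.
    by field; rewrite lt0r_neq0.
  rewrite /K natrM; lra.
apply: (@le_trans _ _ (N%:R^-1 * \sum_(u < N) (1 - (deg k C N n u)%:R / K%:R))%R).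
  rewrite sumrB sumr_const card_ord -mulr_suml -natr_sum.
  have -> : \sum_(i < N) deg k C N n i = k * k.-1 + 2 * k * n by rewrite -Hs big_mkord.
  have hs : (k * k.-1 + 2 * k * n <= 2 * k * N)%N by rewrite /N; nia.
  rewrite -(ler_nat rat) in hs.
  set s := ((k * k.-1 + 2 * k * n)%:R : rat) in hs *.
  have -> : (N%:R^-1 * (1 *+ N - s / K%:R) = 1 - s / (K%:R * N%:R) :> rat)%R.
    rewrite -mulr_natr mul1r; field.
    by rewrite !lt0r_neq0.
  rewrite ler_pdivrMr ?mulr_gt0 // in hs *.
  have h : (s / (K%:R * N%:R) * 2 <= 1 :> rat)%R.
    rewrite mulrAC ler_pdivrMr ?mulr_gt0 // mul1r.
    move: hs; rewrite /K !natrM; lra.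
  lra.
apply: ler_wpM2l; first by rewrite invr_ge0 ltW.
by apply: ler_sum => u _; apply: term.
Qed.
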